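(* Let $W$ be a nonempty closed subset of $\mathbb{R}$, $n$ a positive integer, $\alpha_1,\dots,\alpha_n\in\mathrm{Aut}(W)$, and $G=\langle\alpha_1,\dots,\alpha_n\rangle$. Suppose $G$ contains no nonabelian free subsemigroup. If $\mathrm{Fix}_W(\alpha_i)\ne\emptyset$ for all $i$, then $\mathrm{Fix}_W(G)\ne\emptyset$.
   Context: $\mathrm{Aut}(W)$ is the group of order preserving bijections of $W$ (with the order induced from $\mathbb{R}$). For a subset $S$ of a group acting on $W$, $\mathrm{Fix}_W(S)$ is the set of points of $W$ fixed by every element of $S$. *)

(* Defs.v *)
From Stdlib Require Export Reals Rtopology List.
Open Scope R_scope.

Definition pt (W : R -> Prop) : Type := {x : R | W x}.

Definition is_aut (W : R -> Prop) (f : pt W -> pt W) : Prop :=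
  (exists g : pt W -> pt W,
      (forall x, g (f x) = x) /\ (forall y, f (g y) = y)) /\
  (forall x y : pt W, proj1_sig x <= proj1_sig y ->
                      proj1_sig (f x) <= proj1_sig (f y)).

(* The subgroup of Sym(W) generated by alpha 0, ..., alpha (n-1). *)
Inductive in_gen (W : R -> Prop) (n : nat) (alpha : nat -> pt W -> pt W)
  : (pt W -> pt W) -> Prop :=
| gen_base : forall i, (i < n)%nat -> in_gen W n alpha (alpha i)
| gen_id : in_gen W n alpha (fun x => x)
| gen_comp : forall f g, in_gen W n alpha f -> in_gen W n alpha g ->
    in_gen W n alpha (fun x => f (g x))
| gen_inv : forall f h, in_gen W n alpha f ->
    (forall x, h (f x) = x) -> (forall x, f (h x) = x) ->
    in_gen W n alpha h.

Fixpoint word_eval {W : R -> Prop} (a b : pt W -> pt W) (w : list bool)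
  : pt W -> pt W :=
  match w with
  | nil => fun x => x
  | c :: w' => fun x => (if c then a else b) (word_eval a b w' x)
  end.

(* G contains a nonabelian free subsemigroup: two elements a, b of G
   such that distinct nonempty words in a, b give distinct elements
   (equivalently, a free subsemigroup of rank >= 2). *)
Definition has_nonab_free_subsemigroup (W : R -> Prop) (n : nat)
  (alpha : nat -> pt W -> pt W) : Prop :=
  exists a b, in_gen W n alpha a /\ in_gen W n alpha b /\
    forall w1 w2 : list bool, w1 <> nil -> w2 <> nil ->
      word_eval a b w1 = word_eval a b w2 -> w1 = w2.

(* Main.v *)
Require Import Defs.
From Stdlib Require Import Classical FunctionalExtensionality Lra Lia.

Section S.
Variable W : R -> Prop.

Lemma pt_eq (x y : pt W) : proj1_sig x = proj1_sig y -> x = y.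
Proof. destruct x as [x hx], y as [y hy]; simpl; intros ->; f_equal; apply proof_irrelevance. Qed.

Definition mono (f : pt W -> pt W) := forall x y : pt W,
  proj1_sig x <= proj1_sig y -> proj1_sig (f x) <= proj1_sig (f y).

Definition aut_pair (f fi : pt W -> pt W) :=
  (forall x, fi (f x) = x) /\ (forall y, f (fi y) = y) /\ mono f /\ mono fi.

Lemma aut_sym f fi : aut_pair f fi -> aut_pair fi f.
Proof. intros (h1 & h2 & h3 & h4); repeat split; auto. Qed.

Lemma smono f fi : aut_pair f fi -> forall x y : pt W,
  proj1_sig x < proj1_sig y -> proj1_sig (f x) < proj1_sig (f y).
Proof.
  intros (h1 & h2 & h3 & h4) x y Hxy.
  destruct (Rle_lt_or_eq_dec _ _ (h3 x y (Rlt_le _ _ Hxy))) as [H|H]; auto.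
  apply pt_eq in H. apply (f_equal fi) in H. rewrite !h1 in H. subst; lra.
Qed.

Lemma aut_of_is_aut f : is_aut W f -> exists fi, aut_pair f fi.
Proof.
  intros [[g [h1 h2]] hm]. exists g. repeat split; auto.
  intros x y Hxy. destruct (Rle_or_lt (proj1_sig (g x)) (proj1_sig (g y))) as [H|H]; auto.
  exfalso. pose proof (hm _ _ (Rlt_le _ _ H)) as H'. rewrite !h2 in H'.
  assert (proj1_sig x = proj1_sig y) as E by lra. apply pt_eq in E; subst. lra.
Qed.

Hypothesis HW : closed_set W.

Lemma in_W_of_lub (E : R -> Prop) m : is_lub E m ->
  (forall r, E r -> W r) -> (exists r, E r) -> W m.
Proof.
  intros [Hub Hl] HEW _. apply NNPP; intro Hn.
  destruct (HW m Hn) as [d Hd].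
  assert (is_upper_bound E (m - d)).
  { intros r Er. destruct (Rle_or_lt r (m - d)) as [h|h]; auto.
    exfalso. apply (Hd r); [|apply HEW; auto]. unfold disc.
    pose proof (Hub r Er). pose proof (cond_pos d). apply Rabs_def1; lra. }
  pose proof (Hl _ H). pose proof (cond_pos d). lra.
Qed.

Lemma lub_pt (P : pt W -> Prop) (x0 : pt W) (M : R) :
  P x0 -> (forall x, P x -> proj1_sig x <= M) ->
  exists L : pt W, (forall x, P x -> proj1_sig x <= proj1_sig L) /\
    (forall M', (forall x, P x -> proj1_sig x <= M') -> proj1_sig L <= M').
Proof.
  intros H0 HM.
  set (E := fun r => exists x, P x /\ proj1_sig x = r).
  destruct (completeness E) as [m Hm].
  { exists M. intros r [x [Px <-]]. auto. }
  { exists (proj1_sig x0), x0; auto. }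
  assert (Wm : W m).
  { apply (in_W_of_lub E); auto.
    - intros r [x [_ <-]]. apply (proj2_sig x).
    - exists (proj1_sig x0), x0; auto. }
  exists (exist _ m Wm). simpl. destruct Hm as [Hub Hl]. split.
  - intros x Px. apply Hub. exists x; auto.
  - intros M' HM'. apply Hl. intros r [x [Px <-]]. auto.
Qed.

Lemma glb_pt (P : pt W -> Prop) (x0 : pt W) (M : R) :
  P x0 -> (forall x, P x -> M <= proj1_sig x) ->
  exists L : pt W, (forall x, P x -> proj1_sig L <= proj1_sig x) /\
    (forall M', (forall x, P x -> M' <= proj1_sig x) -> M' <= proj1_sig L).
Proof.
  intros H0 HM.
  set (E := fun r => exists x, P x /\ - proj1_sig x = r).
  destruct (completeness E) as [m Hm].
  { exists (- M). intros r [x [Px <-]]. pose proof (HM x Px). lra. }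
  { exists (- proj1_sig x0), x0; auto. }
  assert (Wm : W (- m)).
  { apply NNPP; intro Hn. destruct (HW _ Hn) as [d Hd]. destruct Hm as [Hub Hl].
    assert (is_upper_bound E (m - d)).
    { intros r Er. destruct (Rle_or_lt r (m - d)) as [h|h]; auto.
      exfalso. destruct Er as [x [Px Ex]]. apply (Hd (proj1_sig x)); [|apply (proj2_sig x)].
      unfold disc. pose proof (Hub r (ex_intro _ x (conj Px Ex))).
      pose proof (cond_pos d). apply Rabs_def1; lra. }
    pose proof (Hl _ H). pose proof (cond_pos d). lra. }
  exists (exist _ (- m) Wm). simpl. destruct Hm as [Hub Hl]. split.
  - intros x Px. assert (E (- proj1_sig x)) by (exists x; auto). pose proof (Hub _ H). lra.
  - intros M' HM'. assert (m <= - M'); [|lra]. apply Hl. intros r [x [Px <-]].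
    pose proof (HM' x Px). lra.
Qed.

Lemma sup_fix f fi (Hf : aut_pair f fi) (P : pt W -> Prop) (L : pt W) :
  (forall x, P x -> proj1_sig x <= proj1_sig L) ->
  (forall M', (forall x, P x -> proj1_sig x <= M') -> proj1_sig L <= M') ->
  (forall x, P x -> P (f x)) -> (forall x, P x -> proj1_sig x <= proj1_sig (f x)) ->
  f L = L.
Proof.
  intros Hub Hl Hcl Hinc. pose proof Hf as (h1 & h2 & h3 & h4). apply pt_eq.
  assert (A : proj1_sig L <= proj1_sig (f L)).
  { apply Hl. intros x Px. eapply Rle_trans; [apply Hinc; auto|]. apply h3; auto. }
  destruct (Rle_lt_or_eq_dec _ _ A) as [B|B]; [|auto]. exfalso.
  assert (C : proj1_sig (fi L) < proj1_sig L).
  { pose proof (smono _ _ (aut_sym _ _ Hf) _ _ B) as C. rewrite h1 in C. exact C. }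
  destruct (classic (exists x, P x /\ proj1_sig (fi L) < proj1_sig x)) as [[x [Px Hx]]|Hn].
  - pose proof (smono _ _ Hf _ _ Hx) as D. rewrite h2 in D. pose proof (Hub _ (Hcl _ Px)). lra.
  - assert (proj1_sig L <= proj1_sig (fi L)); [|lra]. apply Hl. intros x Px.
    apply Rnot_lt_le. intro. apply Hn. eauto.
Qed.

Lemma inf_fix f fi (Hf : aut_pair f fi) (P : pt W -> Prop) (L : pt W) :
  (forall x, P x -> proj1_sig L <= proj1_sig x) ->
  (forall M', (forall x, P x -> M' <= proj1_sig x) -> M' <= proj1_sig L) ->
  (forall x, P x -> P (f x)) -> (forall x, P x -> proj1_sig (f x) <= proj1_sig x) ->
  f L = L.
Proof.
  intros Hub Hl Hcl Hinc. pose proof Hf as (h1 & h2 & h3 & h4). apply pt_eq.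
  assert (A : proj1_sig (f L) <= proj1_sig L).
  { apply Hl. intros x Px. eapply Rle_trans; [|apply Hinc; auto]. apply h3; auto. }
  destruct (Rle_lt_or_eq_dec _ _ A) as [B|B]; [|auto]. exfalso.
  assert (C : proj1_sig L < proj1_sig (fi L)).
  { pose proof (smono _ _ (aut_sym _ _ Hf) _ _ B) as C. rewrite h1 in C. exact C. }
  destruct (classic (exists x, P x /\ proj1_sig x < proj1_sig (fi L))) as [[x [Px Hx]]|Hn].
  - pose proof (smono _ _ Hf _ _ Hx) as D. rewrite h2 in D. pose proof (Hub _ (Hcl _ Px)). lra.
  - assert (proj1_sig (fi L) <= proj1_sig L); [|lra]. apply Hl. intros x Px.
    apply Rnot_lt_le. intro. apply Hn. eauto.
Qed.

End S.
Section S2.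
Variable W : R -> Prop.

Fixpoint it (k : nat) (f : pt W -> pt W) : pt W -> pt W :=
  match k with O => fun x => x | S k' => fun x => f (it k' f x) end.

Lemma it_mono k f : mono W f -> mono W (it k f).
Proof. intros Hm; induction k; intros x y H; simpl; auto. Qed.

Lemma it_fix k f c : f c = c -> it k f c = c.
Proof. intros H; induction k; simpl; auto. rewrite IHk; auto. Qed.

Lemma it_inj k f fi : (forall x, fi (f x) = x) -> forall x y, it k f x = it k f y -> x = y.
Proof. intros H; induction k; simpl; intros x y E; auto.
  apply IHk. rewrite <- (H (it k f x)), <- (H (it k f y)), E. auto. Qed.

Definition free (u w : pt W -> pt W) := forall w1 w2 : list bool, w1 <> nil -> w2 <> nil ->
      word_eval u w w1 = word_eval u w w2 -> w1 = w2.

Lemma pingpong (u w : pt W -> pt W) (D A B : pt W -> Prop)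
  (Hu : forall x y, u x = u y -> x = y) (Hw : forall x y, w x = w y -> x = y)
  (HuD : forall x, D x -> A (u x)) (HwD : forall x, D x -> B (w x))
  (HAD : forall x, A x -> D x) (HBD : forall x, B x -> D x)
  (Hdisj : forall x, A x -> B x -> False) a0 b0 (Ha0 : A a0) (Hb0 : B b0) : free u w.
Proof.
  assert (HD : forall wd x, D x -> D (word_eval u w wd x)).
  { induction wd as [|c wd IH]; simpl; auto. intros x Dx. destruct c; auto. }
  assert (HH : forall (c : bool) wd x, D x -> (if c then A else B) (word_eval u w (c :: wd) x)).
  { intros c wd x Dx; destruct c; simpl; auto. }
  intros w1; induction w1 as [|c1 w1 IH]; intros w2 H1 H2 Heq; [congruence|].
  destruct w2 as [|c2 w2]; [congruence|].
  destruct (Bool.bool_dec c1 c2) as [->|Hne].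
  - assert (E : word_eval u w w1 = word_eval u w w2).
    { apply functional_extensionality; intro x.
      pose proof (f_equal (fun F => F x) Heq) as E; simpl in E. destruct c2; auto. }
    destruct w1 as [|d1 w1], w2 as [|d2 w2]; auto.
    + exfalso. destruct d2.
      * pose proof (HH true w2 b0 (HBD _ Hb0)) as Z. rewrite <- E in Z. simpl in Z. eauto.
      * pose proof (HH false w2 a0 (HAD _ Ha0)) as Z. rewrite <- E in Z. simpl in Z. eauto.
    + exfalso. destruct d1.
      * pose proof (HH true w1 b0 (HBD _ Hb0)) as Z. rewrite E in Z. simpl in Z. eauto.
      * pose proof (HH false w1 a0 (HAD _ Ha0)) as Z. rewrite E in Z. simpl in Z. eauto.
    + f_equal. apply IH; congruence.
  - exfalso. pose proof (f_equal (fun F => F a0) Heq) as E; simpl in E.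
    pose proof (HH c1 w1 a0 (HAD _ Ha0)) as Z1. pose proof (HH c2 w2 a0 (HAD _ Ha0)) as Z2.
    simpl in Z1, Z2. rewrite E in Z1.
    destruct c1, c2; try congruence; eauto.
Qed.

Hypothesis HW : closed_set W.

Lemma key f fi g gi (Hf : aut_pair W f fi) (Hg : aut_pair W g gi) (c b : pt W)
  (Hcb : proj1_sig c < proj1_sig b) (Hfc : f c = c) (Hfb : proj1_sig (f b) < proj1_sig b)
  (Hgb : g b = b) (Hgc : proj1_sig c < proj1_sig (g c))
  (Hnofix : forall y, proj1_sig c <= proj1_sig y -> proj1_sig y < proj1_sig b -> g y <> y) :
  exists N, free (it N f) (it N g).
Proof.
  pose proof Hf as (f1 & f2 & f3 & f4). pose proof Hg as (g1 & g2 & g3 & g4).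
  assert (fb_le : forall k, proj1_sig (it k f b) <= proj1_sig b).
  { induction k; simpl; [lra|]. pose proof (f3 _ _ IHk). lra. }
  assert (fSk : forall k, proj1_sig (it (S k) f b) <= proj1_sig (f b)).
  { intro k; simpl. apply f3, fb_le. }
  assert (cfb : proj1_sig c <= proj1_sig (f b)).
  { pose proof (f3 c b (Rlt_le _ _ Hcb)). rewrite Hfc in H. auto. }
  assert (ginc : forall k, proj1_sig (it k g c) <= proj1_sig (it (S k) g c)).
  { induction k; simpl; [lra|]. apply g3; auto. }
  assert (cg : forall k, proj1_sig c <= proj1_sig (it k g c)).
  { induction k; simpl; [lra|]. pose proof (ginc k). simpl in H. lra. }
  assert (HN : exists N, proj1_sig (it N f b) < proj1_sig (it N g c)).
  { apply NNPP; intro Hn.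
    assert (Hle : forall k, proj1_sig (it k g c) <= proj1_sig (f b)).
    { intros [|k]; simpl; [auto|]. pose proof (fSk k).
      assert (~ proj1_sig (it (S k) f b) < proj1_sig (it (S k) g c)) by eauto.
      simpl in *. lra. }
    set (P := fun x => exists k, x = it k g c).
    destruct (lub_pt W HW P c (proj1_sig (f b))) as [L [Hub Hl]].
    { exists 0%nat; reflexivity. }
    { intros x [k ->]. auto. }
    assert (gL : g L = L).
    { apply (sup_fix W g gi Hg P); auto.
      - intros x [k ->]. exists (S k); reflexivity.
      - intros x [k ->]. apply (ginc k). }
    assert (proj1_sig c <= proj1_sig L) by (apply Hub; exists 0%nat; reflexivity).
    assert (proj1_sig L <= proj1_sig (f b)) by (apply Hl; intros x [k ->]; auto).
    apply (Hnofix L); auto; lra. }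
  destruct HN as [N HN]. exists N.
  pose proof (it_mono N f f3) as fm. pose proof (it_mono N g g3) as gm.
  pose proof (it_fix N f c Hfc) as fc. pose proof (it_fix N g b Hgb) as gb.
  apply (pingpong _ _ (fun x => proj1_sig c <= proj1_sig x <= proj1_sig b)
     (fun x => proj1_sig c <= proj1_sig x <= proj1_sig (it N f b))
     (fun x => proj1_sig (it N g c) <= proj1_sig x <= proj1_sig b)) with (a0 := c) (b0 := b).
  - apply (it_inj N f fi f1).
  - apply (it_inj N g gi g1).
  - intros x [h1 h2]. split; [|apply fm; auto]. pose proof (fm c x h1). rewrite fc in H. auto.
  - intros x [h1 h2]. split; [apply gm; auto|]. pose proof (gm x b h2). rewrite gb in H. auto.
  - intros x [h1 h2]. pose proof (fb_le N). split; lra.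
  - intros x [h1 h2]. pose proof (cg N). split; lra.
  - intros x [h1 h2] [h3 h4]. lra.
  - pose proof (fm c b (Rlt_le _ _ Hcb)). rewrite fc in H. split; lra.
  - pose proof (gm c b (Rlt_le _ _ Hcb)). rewrite gb in H. split; lra.
Qed.

End S2.
Section S3.
Variable W : R -> Prop.
Hypothesis HW : closed_set W.
Variable n : nat.
Variable alpha : nat -> pt W -> pt W.

Lemma it_in_gen k f : in_gen W n alpha f -> in_gen W n alpha (it W k f).
Proof. intros H; induction k; simpl; [apply gen_id|]. apply gen_comp; auto. Qed.

Lemma key_gen f fi g gi (If : in_gen W n alpha f) (Ig : in_gen W n alpha g)
  (Hf : aut_pair W f fi) (Hg : aut_pair W g gi) (c b : pt W)
  (Hcb : proj1_sig c < proj1_sig b) (Hfc : f c = c) (Hfb : proj1_sig (f b) < proj1_sig b)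
  (Hgb : g b = b) (Hgc : proj1_sig c < proj1_sig (g c))
  (Hnofix : forall y, proj1_sig c <= proj1_sig y -> proj1_sig y < proj1_sig b -> g y <> y) :
  has_nonab_free_subsemigroup W n alpha.
Proof.
  destruct (key W HW f fi g gi Hf Hg c b) as [N HN]; auto.
  exists (it W N f), (it W N g). repeat split; try apply it_in_gen; auto.
Qed.

Lemma wrapF F Fi g gi (IF : in_gen W n alpha F) (Ig : in_gen W n alpha g)
  (HF : aut_pair W F Fi) (Hg : aut_pair W g gi) (c b : pt W)
  (Hcb : proj1_sig c < proj1_sig b) (Hfc : F c = c) (Hfb : F b <> b)
  (Hgb : g b = b) (Hgc : proj1_sig c < proj1_sig (g c))
  (Hnofix : forall y, proj1_sig c <= proj1_sig y -> proj1_sig y < proj1_sig b -> g y <> y) :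
  has_nonab_free_subsemigroup W n alpha.
Proof.
  pose proof HF as (h1 & h2 & h3 & h4).
  destruct (Rtotal_order (proj1_sig (F b)) (proj1_sig b)) as [H|[H|H]].
  - apply (key_gen F Fi g gi) with c b; auto.
  - exfalso; apply Hfb, pt_eq; auto.
  - apply (key_gen Fi F g gi) with c b; auto.
    + apply (gen_inv W n alpha F Fi); auto.
    + apply aut_sym; auto.
    + rewrite <- Hfc at 1. auto.
    + pose proof (smono W _ _ (aut_sym _ _ _ HF) _ _ H) as Z. rewrite h1 in Z. auto.
Qed.

Lemma wrapG F Fi G Gi (IF : in_gen W n alpha F) (IG : in_gen W n alpha G)
  (HF : aut_pair W F Fi) (HG : aut_pair W G Gi) (c b : pt W)
  (Hcb : proj1_sig c < proj1_sig b) (Hfc : F c = c) (Hfb : F b <> b)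
  (Hgb : G b = b)
  (Hnofix : forall y, proj1_sig c <= proj1_sig y -> proj1_sig y < proj1_sig b -> G y <> y) :
  has_nonab_free_subsemigroup W n alpha.
Proof.
  pose proof HG as (h1 & h2 & h3 & h4).
  destruct (Rtotal_order (proj1_sig (G c)) (proj1_sig c)) as [H|[H|H]].
  - apply (wrapF F Fi Gi G) with c b; auto.
    + apply (gen_inv W n alpha G Gi); auto.
    + apply aut_sym; auto.
    + rewrite <- Hgb at 1. auto.
    + pose proof (smono W _ _ (aut_sym _ _ _ HG) _ _ H) as Z. rewrite h1 in Z. auto.
    + intros y Y1 Y2 E. apply (Hnofix y Y1 Y2). rewrite <- E at 1. auto.
  - exfalso; apply (Hnofix c); [lra|auto|]. apply pt_eq; auto.
  - apply (wrapF F Fi G Gi) with c b; auto.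
Qed.

End S3.

Theorem lemma4p4 (W : R -> Prop) (HWcl : closed_set W) (HWne : exists x, W x)
  (n : nat) (Hn : (0 < n)%nat) (alpha : nat -> pt W -> pt W)
  (Haut : forall i, (i < n)%nat -> is_aut W (alpha i))
  (Hnofree : ~ has_nonab_free_subsemigroup W n alpha)
  (Hfix : forall i, (i < n)%nat -> exists x : pt W, alpha i x = x) :
  exists x : pt W, forall g, in_gen W n alpha g -> g x = x.
Proof.
  assert (Hinv : forall i, (i < n)%nat -> exists fi, aut_pair W (alpha i) fi).
  { intros i Hi; apply aut_of_is_aut, Haut; auto. }
  assert (Hb : forall i, (i < n)%nat -> in_gen W n alpha (alpha i)).
  { intros; apply gen_base; auto. }
  assert (Main : forall m, (m <= n)%nat -> exists x : pt W, forall i, (i < m)%nat -> alpha i x = x).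
  { induction m as [|m IH]; intros Hm.
    - destruct HWne as [x hx]. exists (exist _ x hx). intros; lia.
    - destruct (IH ltac:(lia)) as [p Hp].
      destruct (Hfix m ltac:(lia)) as [q Hq].
      apply NNPP; intro Hno.
      assert (Hno' : forall x : pt W, (forall i, (i < m)%nat -> alpha i x = x) -> alpha m x <> x).
      { intros x Hx Hmx. apply Hno. exists x. intros i Hi.
        destruct (Nat.eq_dec i m) as [->|]; auto. apply Hx; lia. }
      destruct (Hinv m ltac:(lia)) as [gmi Hgm].
      apply Hnofree.
      set (Hf := fun x : pt W => forall i, (i < m)%nat -> alpha i x = x).
      assert (notH : forall x, ~ Hf x -> exists i, (i < m)%nat /\ alpha i x <> x).
      { intros x Hx. apply NNPP; intro Hn'. apply Hx. intros i Hi.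
        apply NNPP; intro. apply Hn'. eauto. }
      destruct (Rtotal_order (proj1_sig p) (proj1_sig q)) as [Hpq|[Hpq|Hpq]].
      +
        set (S1 := fun x : pt W => proj1_sig x <= proj1_sig q /\ Hf x).
        destruct (lub_pt W HWcl S1 p (proj1_sig q)) as [a [Hua Hla]].
        { split; [lra|exact Hp]. }
        { intros x [h _]; auto. }
        assert (Ha : Hf a).
        { intros i Hi. destruct (Hinv i ltac:(lia)) as [fi Hfi].
          apply (sup_fix W _ fi Hfi S1); auto.
          - intros x [h1 h2]. rewrite (h2 i Hi). split; auto.
          - intros x [h1 h2]. rewrite (h2 i Hi). lra. }
        assert (aq : proj1_sig a <= proj1_sig q) by (apply Hla; intros x [h _]; auto).
        pose proof (Hno' a Ha) as Hma.
        assert (aq' : proj1_sig a < proj1_sig q).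
        { destruct (Rle_lt_or_eq_dec _ _ aq) as [h|h]; auto. apply pt_eq in h. subst. tauto. }
        set (S2 := fun y : pt W => proj1_sig a <= proj1_sig y /\ alpha m y = y).
        destruct (glb_pt W HWcl S2 q (proj1_sig a)) as [b [Hub Hlb]].
        { split; [lra|auto]. }
        { intros x [h _]; auto. }
        assert (Hmb : alpha m b = b).
        { apply (inf_fix W _ gmi Hgm S2); auto.
          - intros x [h1 h2]. rewrite h2. split; auto.
          - intros x [h1 h2]. rewrite h2. lra. }
        assert (ab : proj1_sig a <= proj1_sig b) by (apply Hlb; intros x [h _]; auto).
        assert (bq : proj1_sig b <= proj1_sig q) by (apply Hub; split; [lra|auto]).
        assert (ab' : proj1_sig a < proj1_sig b).
        { destruct (Rle_lt_or_eq_dec _ _ ab) as [h|h]; auto. apply pt_eq in h. subst. tauto. }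
        assert (nof : forall y, proj1_sig a <= proj1_sig y -> proj1_sig y < proj1_sig b -> alpha m y <> y).
        { intros y h1 h2 h3. assert (S2 y) by (split; auto). pose proof (Hub _ H). lra. }
        assert (nHb : ~ Hf b).
        { intro h. assert (S1 b) by (split; auto). pose proof (Hua _ H). lra. }
        destruct (notH b nHb) as [i [Hi Hib]].
        destruct (Hinv i ltac:(lia)) as [fi Hfi].
        apply (wrapG W HWcl n alpha (alpha i) fi (alpha m) gmi) with a b; auto.
        apply Hb; lia.
      + exfalso. apply pt_eq in Hpq. subst. apply (Hno' q Hp Hq).
      +
        set (S1 := fun x : pt W => proj1_sig q <= proj1_sig x /\ Hf x).
        destruct (glb_pt W HWcl S1 p (proj1_sig q)) as [a [Hua Hla]].
        { split; [lra|exact Hp]. }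
        { intros x [h _]; auto. }
        assert (Ha : Hf a).
        { intros i Hi. destruct (Hinv i ltac:(lia)) as [fi Hfi].
          apply (inf_fix W _ fi Hfi S1); auto.
          - intros x [h1 h2]. rewrite (h2 i Hi). split; auto.
          - intros x [h1 h2]. rewrite (h2 i Hi). lra. }
        assert (aq : proj1_sig q <= proj1_sig a) by (apply Hla; intros x [h _]; auto).
        assert (ap : proj1_sig a <= proj1_sig p) by (apply Hua; split; [lra|auto]).
        pose proof (Hno' a Ha) as Hma.
        assert (aq' : proj1_sig q < proj1_sig a).
        { destruct (Rle_lt_or_eq_dec _ _ aq) as [h|h]; auto. apply pt_eq in h. subst. tauto. }
        set (S2 := fun y : pt W => proj1_sig y <= proj1_sig a /\ alpha m y = y).
        destruct (lub_pt W HWcl S2 q (proj1_sig a)) as [b [Hub Hlb]].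
        { split; [lra|auto]. }
        { intros x [h _]; auto. }
        assert (Hmb : alpha m b = b).
        { apply (sup_fix W _ gmi Hgm S2); auto.
          - intros x [h1 h2]. rewrite h2. split; auto.
          - intros x [h1 h2]. rewrite h2. lra. }
        assert (ba : proj1_sig b <= proj1_sig a) by (apply Hlb; intros x [h _]; auto).
        assert (qb : proj1_sig q <= proj1_sig b) by (apply Hub; split; [lra|auto]).
        assert (ba' : proj1_sig b < proj1_sig a).
        { destruct (Rle_lt_or_eq_dec _ _ ba) as [h|h]; auto. apply pt_eq in h. subst. tauto. }
        assert (nof : forall y, proj1_sig b < proj1_sig y -> proj1_sig y <= proj1_sig a -> alpha m y <> y).
        { intros y h1 h2 h3. assert (S2 y) by (split; auto). pose proof (Hub _ H). lra. }
        assert (nHb : ~ Hf b).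
        { intro h. assert (S1 b) by (split; auto). pose proof (Hua _ H). lra. }
        destruct (notH b nHb) as [i [Hi Hib]].
        destruct (Hinv i ltac:(lia)) as [fi Hfi].
        set (S3 := fun x : pt W => (proj1_sig b <= proj1_sig x <= proj1_sig a) /\ alpha i x = x).
        destruct (glb_pt W HWcl S3 a (proj1_sig b)) as [d [Hud Hld]].
        { split; [lra|apply Ha; auto]. }
        { intros x [h _]; lra. }
        assert (Hid : alpha i d = d).
        { apply (inf_fix W _ fi Hfi S3); auto.
          - intros x [h1 h2]. rewrite h2. split; auto.
          - intros x [h1 h2]. rewrite h2. lra. }
        assert (bd : proj1_sig b <= proj1_sig d) by (apply Hld; intros x [h _]; lra).
        assert (da : proj1_sig d <= proj1_sig a) by (apply Hud; split; [lra|apply Ha; auto]).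
        assert (bd' : proj1_sig b < proj1_sig d).
        { destruct (Rle_lt_or_eq_dec _ _ bd) as [h|h]; auto. apply pt_eq in h. subst. tauto. }
        assert (nof2 : forall y, proj1_sig b <= proj1_sig y -> proj1_sig y < proj1_sig d -> alpha i y <> y).
        { intros y h1 h2 h3. assert (S3 y) by (split; [lra|auto]). pose proof (Hud _ H). lra. }
        apply (wrapG W HWcl n alpha (alpha m) gmi (alpha i) fi) with b d; auto; try (apply Hb; lia). }
  destruct (Main n (le_n n)) as [x Hx]. exists x.
  intros g Hg. induction Hg; auto.
  - simpl. rewrite IHHg2; auto.
  - transitivity (h (f x)); [now rewrite IHHg|auto].
Qed.
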